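(* Let $X$ be a nonempty metric space such that (1) every closed bounded ball in $X$ is compact, and (2) there exist $x_0\in X$ and $r>0$ such that for every $y\in X$ and every $\lambda>1$ there is a $\lambda$-bi-Lipschitz auto-homeomorphism $f$ of $X$ with $d(f(y),x_0)<r$. Then $X$ is almost-isometry unique.
   Context: For $\lambda>1$, an injection $f$ between metric spaces is $\lambda$-bi-Lipschitz if for all distinct $a,b$ in its domain, $d(f(a),f(b))<\lambda d(a,b)$ and $d(a,b)<\lambda d(f(a),f(b))$. Two metric spaces $X,Y$ are almost isometric if for every $\lambda>1$ there is a $\lambda$-bi-Lipschitz bijection (homeomorphism) from $X$ onto $Y$. A metric space $X$ is almost-isometry unique if every metric space almost isometric to $X$ is isometric to $X$. *)

(* Defs.v *)
From Stdlib Require Import Reals List.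
Open Scope R_scope.

Record MetricSpace := {
  carrier :> Type;
  mdist : carrier -> carrier -> R;
  dist_nonneg : forall x y, 0 <= mdist x y;
  dist_eq0 : forall x y, mdist x y = 0 <-> x = y;
  dist_sym : forall x y, mdist x y = mdist y x;
  dist_tri : forall x y z, mdist x z <= mdist x y + mdist y z
}.
Arguments mdist {m} _ _.

Definition is_open {X : MetricSpace} (U : X -> Prop) : Prop :=
  forall x, U x -> exists e, 0 < e /\ forall y, mdist x y < e -> U y.

Definition is_compact {X : MetricSpace} (K : X -> Prop) : Prop :=
  forall (I : Type) (U : I -> X -> Prop),
    (forall i, is_open (U i)) ->
    (forall x, K x -> exists i, U i x) ->
    exists l : list I, forall x, K x -> exists i, In i l /\ U i x.

Definition closed_ball {X : MetricSpace} (x : X) (r : R) : X -> Prop :=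
  fun y => mdist x y <= r.

Definition bijective {A B : Type} (f : A -> B) : Prop :=
  exists g : B -> A, (forall a, g (f a) = a) /\ (forall b, f (g b) = b).

Definition bi_lipschitz {X Y : MetricSpace} (lam : R) (f : X -> Y) : Prop :=
  (forall a b, f a = f b -> a = b) /\
  forall a b : X, a <> b ->
    mdist (f a) (f b) < lam * mdist a b /\ mdist a b < lam * mdist (f a) (f b).

Definition almost_isometric (X Y : MetricSpace) : Prop :=
  forall lam, 1 < lam -> exists f : X -> Y, bijective f /\ bi_lipschitz lam f.

Definition isometric (X Y : MetricSpace) : Prop :=
  exists f : X -> Y, bijective f /\ forall a b : X, mdist (f a) (f b) = mdist a b.

Definition almost_isometry_unique (X : MetricSpace) : Prop :=
  forall Y : MetricSpace, almost_isometric X Y -> isometric X Y.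

(* Main.v *)
Require Import Defs.
From Stdlib Require Import Reals Lra Lia List ClassicalEpsilon Classical Cantor.
Open Scope R_scope.

Definition mtri := Defs.dist_tri.
Definition msym := Defs.dist_sym.
Definition mnn := Defs.dist_nonneg.
Definition meq0 := Defs.dist_eq0.
Arguments mtri {m}. Arguments msym {m}. Arguments mnn {m}. Arguments meq0 {m}.

Lemma abs_le_between (a b : R) : Rabs a <= b -> - b <= a <= b.
Proof. unfold Rabs; destruct Rcase_abs; lra. Qed.

Lemma dist_self {X : MetricSpace} (x : X) : mdist x x = 0.
Proof. apply meq0; reflexivity. Qed.

Lemma dist_diff {X : MetricSpace} (p q p' q' : X) :
  Rabs (mdist p q - mdist p' q') <= mdist p p' + mdist q q'.
Proof.
  pose proof (mtri p p' q). pose proof (mtri p' q' q).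
  pose proof (mtri p' p q'). pose proof (mtri p q q').
  pose proof (msym p p'). pose proof (msym q q').
  unfold Rabs; destruct Rcase_abs; lra.
Qed.

Lemma eq_of_small (A B : R) : (forall e, 0 < e -> Rabs (A - B) < e) -> A = B.
Proof.
  intros H. destruct (Req_dec A B) as [|Hn]; auto.
  assert (0 < Rabs (A - B)) by (apply Rabs_pos_lt; lra).
  specialize (H _ H0). lra.
Qed.

Lemma pt_eq_of_small {X : MetricSpace} (a b : X) :
  (forall e, 0 < e -> mdist a b < e) -> a = b.
Proof.
  intros H. apply meq0. pose proof (mnn a b).
  destruct (Req_dec (mdist a b) 0); auto.
  specialize (H (mdist a b)). lra.
Qed.

Lemma approx_le (A B : R) : 0 <= B ->
  (forall e, 0 < e -> e <= 1 -> exists s t mu, 0 <= t /\ Rabs (A - s) <= e /\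
     Rabs (B - t) <= e /\ 0 < mu /\ mu <= 1 + e /\ s <= mu * t) -> A <= B.
Proof.
  intros HB H. destruct (Rle_dec A B) as [|Hn]; auto. exfalso.
  set (e := Rmin 1 ((A - B) / (2 * (B + 3)))).
  assert (He : 0 < e).
  { unfold e; apply Rmin_pos; [lra|]. apply Rdiv_lt_0_compat; lra. }
  assert (He1 : e <= 1) by apply Rmin_l.
  assert (He2 : e * (2 * (B+3)) <= A - B).
  { assert (e <= (A - B) / (2 * (B + 3))) by apply Rmin_r.
    apply Rmult_le_compat_r with (r := 2*(B+3)) in H0; [|lra].
    unfold Rdiv in H0. rewrite Rmult_assoc, Rinv_l in H0; lra. }
  destruct (H e He He1) as (s & t & mu & Ht & H1 & H2 & Hm & Hm1 & Hs).
  apply abs_le_between in H1. apply abs_le_between in H2.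
  assert (mu * t <= (1 + e) * t) by (apply Rmult_le_compat_r; lra).
  assert ((1+e) * t <= (1+e) * (B + e)) by (apply Rmult_le_compat_l; lra).
  nra.
Qed.

Lemma approx_eq (A B : R) : 0 <= A -> 0 <= B ->
  (forall e, 0 < e -> e <= 1 -> exists s t mu, 0 <= s /\ 0 <= t /\ Rabs (A - s) <= e /\
     Rabs (B - t) <= e /\ 0 < mu /\ mu <= 1 + e /\ s <= mu * t /\ t <= mu * s) -> A = B.
Proof.
  intros HA HB H. apply Rle_antisym.
  - apply approx_le; auto. intros e He He1.
    destruct (H e He He1) as (s & t & mu & ?&?&?&?&?&?&?&?). exists s, t, mu; tauto.
  - apply approx_le; auto. intros e He He1.
    destruct (H e He He1) as (s & t & mu & ?&?&?&?&?&?&?&?). exists t, s, mu; tauto.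
Qed.

Definition CP (Z : MetricSpace) := forall (u : nat -> Z) (z : Z) (R0 : R),
  (forall n, mdist (u n) z <= R0) ->
  exists a, forall e, 0 < e -> forall N, exists n, (N <= n)%nat /\ mdist (u n) a < e.

Lemma ball_open {X : MetricSpace} (a : X) (r : R) : is_open (fun z => mdist a z < r).
Proof.
  intros x Hx. exists (r - mdist a x). split; [lra|].
  intros y Hy. pose proof (mtri a x y). lra.
Qed.

Lemma list_max_bound {A : Type} (f : A -> nat) (l : list A) :
  forall a, In a l -> (f a <= fold_right (fun a m => Nat.max (f a) m) 0%nat l)%nat.
Proof.
  induction l; simpl; intros b Hb; [contradiction|].
  destruct Hb as [<-|Hb]; [lia|]. specialize (IHl b Hb). lia.
Qed.

Lemma compact_cluster {X : MetricSpace} (K : X -> Prop) (u : nat -> X) :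
  is_compact K -> (forall n, K (u n)) ->
  exists a, forall e, 0 < e -> forall N, exists n, (N <= n)%nat /\ mdist (u n) a < e.
Proof.
  intros HK Hu. apply NNPP. intros Hn.
  assert (Hall : forall a, exists p : R * nat, 0 < fst p /\
            forall n, (snd p <= n)%nat -> fst p <= mdist (u n) a).
  { intros a. apply NNPP; intros Hna. apply Hn. exists a. intros e He N.
    apply NNPP; intros Hc. apply Hna. exists (e, N). simpl. split; auto.
    intros n Hnn. apply Rnot_lt_le. intros Hl. apply Hc. exists n; auto. }
  set (P := fun a => epsilon (inhabits (0, 0%nat)) (fun p : R * nat => 0 < fst p /\
            forall n, (snd p <= n)%nat -> fst p <= mdist (u n) a)).
  assert (HP : forall a, 0 < fst (P a) /\ forall n, (snd (P a) <= n)%nat -> fst (P a) <= mdist (u n) a).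
  { intros a. unfold P. apply epsilon_spec. apply Hall. }
  destruct (HK X (fun a z => mdist a z < fst (P a))) as [l Hl].
  - intros a. apply ball_open.
  - intros x _. exists x. rewrite dist_self. apply HP.
  - set (M := fold_right (fun a m => Nat.max (snd (P a)) m) 0%nat l).
    destruct (Hl (u M) (Hu M)) as [a [Ha Hd]].
    pose proof (list_max_bound (fun a => snd (P a)) l a Ha).
    destruct (HP a) as [_ H2]. specialize (H2 M H). rewrite msym in H2. lra.
Qed.

Lemma compact_CP (X : MetricSpace) :
  (forall (x : X) (r : R), is_compact (closed_ball x r)) -> CP X.
Proof.
  intros Hc u z R0 Hu. apply (compact_cluster (closed_ball z R0)); auto.
  intros n. unfold closed_ball. rewrite msym. auto.
Qed.

Lemma archi (e : R) : 0 < e -> exists N : nat, / (INR N + 1) < e.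
Proof.
  intros He. destruct (archimed_cor1 e He) as [N [H1 H2]]. exists N.
  assert (0 < INR N) by (apply lt_0_INR; lia).
  apply Rle_lt_trans with (/ INR N); auto.
  apply Rlt_le, Rinv_lt_contravar; nra.
Qed.

Lemma inv_pos_nat (m : nat) : 0 < / (INR m + 1).
Proof. apply Rinv_0_lt_compat. pose proof (pos_INR m). lra. Qed.

Lemma inv_mono_nat (m M : nat) : (M <= m)%nat -> / (INR m + 1) <= / (INR M + 1).
Proof.
  intros H. apply le_INR in H. pose proof (pos_INR M).
  apply Rinv_le_contravar; lra.
Qed.

Definition dense {X : MetricSpace} (s : nat -> X) :=
  forall x e, 0 < e -> exists i, mdist x (s i) < e.

Lemma separable (X : MetricSpace) (x0 : X) :
  (forall (x : X) (r : R), is_compact (closed_ball x r)) -> exists s : nat -> X, dense s.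
Proof.
  intros Hc.
  assert (HL : forall m : nat, exists l : list X, forall x, closed_ball x0 (INR m) x ->
            exists i, In i l /\ mdist i x < / (INR m + 1)).
  { intros m. apply (Hc x0 (INR m) X (fun a z => mdist a z < / (INR m + 1))).
    - intros a. apply ball_open.
    - intros x _. exists x. rewrite dist_self. apply inv_pos_nat. }
  set (L := fun m => epsilon (inhabits nil) (fun l : list X => forall x, closed_ball x0 (INR m) x ->
            exists i, In i l /\ mdist i x < / (INR m + 1))).
  assert (HL' : forall m x, closed_ball x0 (INR m) x -> exists i, In i (L m) /\ mdist i x < / (INR m + 1)).
  { intros m. unfold L. apply epsilon_spec. apply HL. }
  exists (fun j => let p := Cantor.of_nat j in nth (snd p) (L (fst p)) x0).
  intros x e He.
  destruct (archi e He) as [M1 HM1].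
  destruct (INR_unbounded (mdist x0 x)) as [M2 HM2].
  set (m := Nat.max M1 M2).
  destruct (HL' m x) as [i [Hi Hd]].
  { unfold closed_ball. apply Rlt_le, Rlt_le_trans with (INR M2); auto.
    apply le_INR. lia. }
  destruct (In_nth _ _ x0 Hi) as [k [_ Hk]].
  exists (Cantor.to_nat (m, k)). cbv zeta. rewrite Cantor.cancel_of_to. simpl. rewrite Hk.
  rewrite msym. apply Rlt_le_trans with (/ (INR m + 1)); auto.
  apply Rle_trans with (/ (INR M1 + 1)); [apply inv_mono_nat; lia | lra].
Qed.

Definition IO (G : R -> nat -> Prop) :=
  forall e, 0 < e -> forall N, exists n, (N <= n)%nat /\ G e n.

Lemma GC (Z : MetricSpace) (HZ : CP Z) (G : R -> nat -> Prop)
  (Gm : forall e e' n, G e n -> e <= e' -> G e' n) (HG : IO G)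
  (u : nat -> Z) (z : Z) (R0 : R) (Hu : forall n, mdist (u n) z <= R0) :
  exists a, IO (fun e n => G e n /\ mdist (u n) a < e).
Proof.
  assert (H : forall m, exists n, (m <= n)%nat /\ G (/ (INR m + 1)) n).
  { intros m. apply HG. apply inv_pos_nat. }
  set (nm := fun m => proj1_sig (constructive_indefinite_description _ (H m))).
  assert (Hnm : forall m, (m <= nm m)%nat /\ G (/ (INR m + 1)) (nm m)).
  { intros m. unfold nm. apply proj2_sig. }
  destruct (HZ (fun m => u (nm m)) z R0) as [a Ha]; [intros; apply Hu|].
  exists a. intros e He N.
  destruct (archi e He) as [M0 HM0].
  destruct (Ha e He (Nat.max N M0)) as [m [Hm Hd]].
  exists (nm m). destruct (Hnm m) as [H1 H2]. split; [lia|]. split; auto.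
  apply Gm with (/ (INR m + 1)); auto.
  apply Rle_trans with (/ (INR M0 + 1)); [apply inv_mono_nat; lia | lra].
Qed.

Definition Good {X Y : MetricSpace} (k : nat -> Y -> X) (ki : nat -> X -> Y)
  (dd : nat -> Y) (ee : nat -> X) (c : nat -> X) (b : nat -> Y) (j : nat) (e : R) (n : nat) : Prop :=
  forall i, (i < j)%nat -> mdist (k n (dd i)) (c i) < e /\ mdist (ki n (ee i)) (b i) < e.

Definition upd {A : Type} (c : nat -> A) (j : nat) (a : A) : nat -> A :=
  fun i => if Nat.eq_dec i j then a else c i.

Lemma Good_mono {X Y : MetricSpace} k ki dd ee (c : nat -> X) (b : nat -> Y) j :
  forall e e' n, Good k ki dd ee c b j e n -> e <= e' -> Good k ki dd ee c b j e' n.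
Proof.
  intros e e' n H He i Hi. destruct (H i Hi). split; lra.
Qed.

Lemma step {X Y : MetricSpace} (HX : CP X) (HY : CP Y) (x0 : X) (y0 : Y)
  (k : nat -> Y -> X) (ki : nat -> X -> Y)
  (bk : forall y, exists R0, forall n, mdist (k n y) x0 <= R0)
  (bki : forall x, exists R0, forall n, mdist (ki n x) y0 <= R0)
  dd ee c b j :
  IO (Good k ki dd ee c b j) ->
  exists p : X * Y, IO (Good k ki dd ee (upd c j (fst p)) (upd b j (snd p)) (S j)).
Proof.
  intros HG.
  destruct (bk (dd j)) as [R1 H1]. destruct (bki (ee j)) as [R2 H2].
  destruct (GC X HX _ (Good_mono k ki dd ee c b j) HG (fun n => k n (dd j)) x0 R1 H1) as [a Ha].
  assert (Gm2 : forall e e' n, (Good k ki dd ee c b j e n /\ mdist (k n (dd j)) a < e) -> e <= e' ->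
     (Good k ki dd ee c b j e' n /\ mdist (k n (dd j)) a < e')).
  { intros e e' n [Hg Hd] He. split; [eapply Good_mono; eauto | lra]. }
  destruct (GC Y HY _ Gm2 Ha (fun n => ki n (ee j)) y0 R2 H2) as [a' Ha'].
  exists (a, a'). intros e He N. destruct (Ha' e He N) as [n [Hn [[Hg Hd] Hd']]].
  exists n. split; auto. intros i Hi. unfold upd; simpl.
  destruct (Nat.eq_dec i j) as [->|Hij]; auto.
  apply Hg. lia.
Qed.

Section Build.
Fixpoint build {X Y : MetricSpace} (x0 : X) (y0 : Y) k ki dd ee (j : nat) : (nat -> X) * (nat -> Y) :=
  match j with
  | O => (fun _ => x0, fun _ => y0)
  | S j' => let cb := build x0 y0 k ki dd ee j' in
      let p := epsilon (inhabits (x0, y0)) (fun p : X * Y =>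
                 IO (Good k ki dd ee (upd (fst cb) j' (fst p)) (upd (snd cb) j' (snd p)) (S j'))) in
      (upd (fst cb) j' (fst p), upd (snd cb) j' (snd p))
  end.
End Build.

Lemma build_IO {X Y : MetricSpace} (HX : CP X) (HY : CP Y) (x0 : X) (y0 : Y) k ki
  (bk : forall y, exists R0, forall n, mdist (k n y) x0 <= R0)
  (bki : forall x, exists R0, forall n, mdist (ki n x) y0 <= R0) dd ee :
  forall j, IO (Good k ki dd ee (fst (build x0 y0 k ki dd ee j)) (snd (build x0 y0 k ki dd ee j)) j).
Proof.
  induction j.
  - intros e He N. exists N. split; auto. intros i Hi. lia.
  - simpl. apply (epsilon_spec (inhabits (x0, y0)) (fun p : X * Y =>
                 IO (Good k ki dd ee (upd (fst (build x0 y0 k ki dd ee j)) j (fst p))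
                    (upd (snd (build x0 y0 k ki dd ee j)) j (snd p)) (S j)))).
    eapply step; eauto.
Qed.

Lemma build_stable {X Y : MetricSpace} (x0 : X) (y0 : Y) k ki dd ee :
  forall j i, (i < j)%nat ->
    fst (build x0 y0 k ki dd ee j) i = fst (build x0 y0 k ki dd ee (S i)) i /\
    snd (build x0 y0 k ki dd ee j) i = snd (build x0 y0 k ki dd ee (S i)) i.
Proof.
  induction j; intros i Hi; [lia|].
  destruct (Nat.eq_dec i j) as [->|Hij]; [auto|].
  rewrite <- (proj1 (IHj i ltac:(lia))), <- (proj2 (IHj i ltac:(lia))).
  simpl. unfold upd. destruct (Nat.eq_dec i j); [lia|]. auto.
Qed.

Lemma diag_exists {X Y : MetricSpace} (HX : CP X) (HY : CP Y) (x0 : X) (y0 : Y) k ki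
  (bk : forall y, exists R0, forall n, mdist (k n y) x0 <= R0)
  (bki : forall x, exists R0, forall n, mdist (ki n x) y0 <= R0) dd ee :
  exists (c : nat -> X) (b : nat -> Y), forall j, IO (Good k ki dd ee c b j).
Proof.
  exists (fun i => fst (build x0 y0 k ki dd ee (S i)) i).
  exists (fun i => snd (build x0 y0 k ki dd ee (S i)) i).
  intros j e He N. destruct (build_IO HX HY x0 y0 k ki bk bki dd ee j e He N) as [n [Hn Hg]].
  exists n. split; auto. intros i Hi. destruct (build_stable x0 y0 k ki dd ee j i Hi) as [E1 E2].
  rewrite <- E1, <- E2. auto.
Qed.

Lemma Gexists {X Y : MetricSpace} (HX : CP X) (x0 : X) (k : nat -> Y -> X) (ki : nat -> X -> Y)
  (mu : nat -> R)
  (Lip : forall n a b, mdist (k n a) (k n b) <= mu n * mdist a b /\ mdist a b <= mu n * mdist (k n a) (k n b))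
  (Hmu : forall n, 0 < mu n)
  (Hmu1 : forall e, 0 < e -> exists N, forall n, (N <= n)%nat -> mu n <= 1 + e)
  (kki : forall n x, k n (ki n x) = x)
  (bk : forall y, exists R0, forall n, mdist (k n y) x0 <= R0)
  dd ee c b (HG : forall j, IO (Good k ki dd ee c b j)) :
  forall y, exists a, forall l, mdist a (c l) = mdist y (dd l) /\ mdist a (ee l) = mdist y (b l).
Proof.
  intros y.
  assert (Hj : forall j, exists a, forall l, (l < j)%nat ->
             mdist a (c l) = mdist y (dd l) /\ mdist a (ee l) = mdist y (b l)).
  { intros j. destruct (bk y) as [R0 HR0].
    destruct (GC X HX _ (Good_mono k ki dd ee c b j) (HG j) (fun n => k n y) x0 R0 HR0) as [a Ha].
    exists a. intros l Hl. split.
    - apply approx_eq; try apply mnn. intros e He He1.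
      destruct (Hmu1 e He) as [N HN].
      destruct (Ha (e/2) ltac:(lra) N) as [n [Hn [Hg Hd]]].
      destruct (Hg l Hl) as [Hg1 _].
      exists (mdist (k n y) (k n (dd l))), (mdist y (dd l)), (mu n).
      pose proof (dist_diff a (c l) (k n y) (k n (dd l))).
      rewrite (msym a (k n y)), (msym (c l) (k n (dd l))) in H.
      destruct (Lip n y (dd l)).
      repeat split; try apply mnn; try lra; auto.
      all: try (rewrite Rminus_diag, Rabs_R0; lra). all: specialize (HN n Hn); lra.
    - apply approx_eq; try apply mnn. intros e He He1.
      destruct (Hmu1 e He) as [N HN].
      destruct (Ha (e/2) ltac:(lra) N) as [n [Hn [Hg Hd]]].
      destruct (Hg l Hl) as [_ Hg2].
      exists (mdist (k n y) (ee l)), (mdist y (ki n (ee l))), (mu n).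
      pose proof (dist_diff a (ee l) (k n y) (ee l)).
      pose proof (dist_diff y (b l) y (ki n (ee l))).
      rewrite (msym a (k n y)), dist_self in H. rewrite dist_self, (msym (b l)) in H0.
      destruct (Lip n y (ki n (ee l))). rewrite kki in H1, H2.
      specialize (HN n Hn).
      repeat split; try apply mnn; try lra; auto. }
  set (aj := fun j => epsilon (inhabits x0) (fun a => forall l, (l < j)%nat ->
             mdist a (c l) = mdist y (dd l) /\ mdist a (ee l) = mdist y (b l))).
  assert (Haj : forall j l, (l < j)%nat ->
             mdist (aj j) (c l) = mdist y (dd l) /\ mdist (aj j) (ee l) = mdist y (b l)).
  { intros j. unfold aj. apply epsilon_spec. apply Hj. }
  destruct (HX (fun m => aj (S m)) (c 0%nat) (mdist y (dd 0%nat))) as [a Ha].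
  { intros m. simpl. rewrite (proj1 (Haj (S m) 0%nat ltac:(lia))). apply Rle_refl. }
  exists a. intros l. split; apply eq_of_small; intros e He;
    destruct (Ha e He l) as [m [Hm Hd]]; destruct (Haj (S m) l ltac:(lia)) as [E1 E2].
  - rewrite <- E1. pose proof (dist_diff a (c l) (aj (S m)) (c l)).
    rewrite dist_self, (msym a (aj (S m))) in H. lra.
  - rewrite <- E2. pose proof (dist_diff a (ee l) (aj (S m)) (ee l)).
    rewrite dist_self, (msym a (aj (S m))) in H. lra.
Qed.

Definition LipPair {X Y : MetricSpace} (l : R) (f : X -> Y) :=
  forall a b, mdist (f a) (f b) <= l * mdist a b /\ mdist a b <= l * mdist (f a) (f b).

Lemma bl_lip {X Y : MetricSpace} (l : R) (f : X -> Y) : 0 < l -> bi_lipschitz l f -> LipPair l f.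
Proof.
  intros Hl [_ H] a b. destruct (classic (a = b)) as [->|Hab].
  - rewrite !dist_self. lra.
  - destruct (H a b Hab). lra.
Qed.

Lemma lip_inv {X Y : MetricSpace} (l : R) (f : X -> Y) (g : Y -> X) :
  (forall a, g (f a) = a) -> (forall b, f (g b) = b) -> LipPair l f -> LipPair l g.
Proof.
  intros H1 H2 Hf a b. destruct (Hf (g a) (g b)) as [A B]. rewrite !H2 in A, B. split; auto.
Qed.

Lemma lip_comp {X Y Z : MetricSpace} (l1 l2 : R) (f : X -> Y) (g : Y -> Z) :
  0 < l1 -> 0 < l2 -> LipPair l1 f -> LipPair l2 g -> LipPair (l1 * l2) (fun x => g (f x)).
Proof.
  intros P1 P2 Hf Hg a b. destruct (Hf a b) as [A B]. destruct (Hg (f a) (f b)) as [C D].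
  split.
  - apply Rle_trans with (l2 * mdist (f a) (f b)); auto.
    rewrite (Rmult_comm l1 l2), Rmult_assoc. apply Rmult_le_compat_l; lra.
  - apply Rle_trans with (l1 * mdist (f a) (f b)); auto.
    rewrite Rmult_assoc. apply Rmult_le_compat_l; lra.
Qed.

Definition lam (n : nat) := 1 + / (INR n + 1).

Lemma lam_bounds n : 1 < lam n <= 2.
Proof.
  unfold lam. pose proof (inv_pos_nat n).
  pose proof (inv_mono_nat n 0 ltac:(lia)). simpl in H0. rewrite Rplus_0_l, Rinv_1 in H0. lra.
Qed.

Lemma data (X Y : MetricSpace) (x0 : X) (r : R) (y0 : Y) :
  almost_isometric X Y ->
  (forall (y : X) (l : R), 1 < l ->
       exists f : X -> X, bijective f /\ bi_lipschitz l f /\ mdist (f y) x0 < r) ->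
  exists (k : nat -> Y -> X) (ki : nat -> X -> Y),
    (forall n x, k n (ki n x) = x) /\ (forall n y, ki n (k n y) = y) /\
    (forall n, LipPair (lam n * lam n) (k n)) /\ (forall n, LipPair (lam n * lam n) (ki n)) /\
    (forall n, mdist (k n y0) x0 < r).
Proof.
  intros HAI H2.
  assert (Hn : forall n, exists p : (Y -> X) * (X -> Y),
    (forall x, fst p (snd p x) = x) /\ (forall y, snd p (fst p y) = y) /\
    LipPair (lam n * lam n) (fst p) /\ LipPair (lam n * lam n) (snd p) /\
    mdist (fst p y0) x0 < r).
  { intros n. destruct (lam_bounds n) as [L1 L2].
    destruct (HAI (lam n) L1) as [f [[g [Hgf Hfg]] Hf]].
    destruct (H2 (g y0) (lam n) L1) as [h [[h' [Hh'h Hhh']] [Hh Hd]]].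
    exists (fun y => h (g y), fun x => f (h' x)). simpl.
    apply bl_lip in Hf; [|lra]. apply bl_lip in Hh; [|lra].
    repeat split.
    - intros x. rewrite Hgf. auto.
    - intros y. rewrite Hh'h. auto.
    - apply lip_comp; try lra; auto. eapply lip_inv; eauto.
    - apply lip_comp; try lra; auto. eapply lip_inv; eauto.
    - apply lip_comp; try lra; auto. eapply lip_inv; eauto.
    - apply lip_comp; try lra; auto. eapply lip_inv; eauto.
    - auto. }
  exists (fun n => fst (proj1_sig (constructive_indefinite_description _ (Hn n)))).
  exists (fun n => snd (proj1_sig (constructive_indefinite_description _ (Hn n)))).
  set (P := fun n => proj2_sig (constructive_indefinite_description _ (Hn n))).
  split; [intros n; apply (P n)|].
  split; [intros n; apply (P n)|].
  split; [intros n; apply (P n)|].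
  split; [intros n; apply (P n)|].
  intros n; apply (P n).
Qed.

Theorem theorem3p1 (X : MetricSpace) :
  inhabited X ->
  (forall (x : X) (r : R), is_compact (closed_ball x r)) ->
  (exists (x0 : X) (r : R), 0 < r /\
     forall (y : X) (lam : R), 1 < lam ->
       exists f : X -> X, bijective f /\ bi_lipschitz lam f /\ mdist (f y) x0 < r) ->
  almost_isometry_unique X.
Proof.
  intros _ Hc [x0 [r [Hr H2]]] Y HAI.
  destruct (HAI 2 ltac:(lra)) as [f0 _]. set (y0 := f0 x0).
  destruct (data X Y x0 r y0 HAI H2) as (k & ki & kki & kik & Lk & Lki & Hb).
  set (mu := fun n => lam n * lam n).
  assert (Hmu : forall n, 0 < mu n /\ mu n <= 4).
  { intros n. destruct (lam_bounds n). unfold mu. nra. }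
  assert (Hmu1 : forall e, 0 < e -> exists N, forall n, (N <= n)%nat -> mu n <= 1 + e).
  { intros e He. destruct (archi (e/3) ltac:(lra)) as [N HN]. exists N. intros n Hn.
    pose proof (inv_mono_nat n N Hn). pose proof (inv_pos_nat n).
    pose proof (lam_bounds n). unfold mu, lam in *. nra. }
  assert (HX : CP X) by (apply compact_CP; auto).
  assert (HY : CP Y).
  { intros u z R0 Hu.
    destruct (HX (fun n => k 0%nat (u n)) (k 0%nat z) (mu 0%nat * R0)) as [a Ha].
    { intros n. destruct (Lk 0%nat (u n) z). apply Rle_trans with (1 := H).
      destruct (Hmu 0%nat). apply Rmult_le_compat_l; auto; lra. }
    exists (ki 0%nat a). intros e He N. destruct (Hmu 0%nat) as [M1 M2].
    destruct (Ha (e / mu 0%nat) ltac:(apply Rdiv_lt_0_compat; lra) N) as [n [Hn Hd]].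
    exists n. split; auto. rewrite <- (kik 0%nat (u n)).
    destruct (Lki 0%nat (k 0%nat (u n)) a) as [A _]. apply Rle_lt_trans with (1 := A).
    apply Rmult_lt_compat_l with (r := mu 0%nat) in Hd; auto.
    unfold Rdiv in Hd. rewrite (Rmult_comm e), <- Rmult_assoc, Rinv_r, Rmult_1_l in Hd; [|lra].
    exact Hd. }
  assert (bk : forall y, exists R0, forall n, mdist (k n y) x0 <= R0).
  { intros y. exists (4 * mdist y y0 + r). intros n.
    pose proof (mtri (k n y) (k n y0) x0). destruct (Lk n y y0). destruct (Hmu n).
    pose proof (Hb n). pose proof (mnn y y0).
    assert (mu n * mdist y y0 <= 4 * mdist y y0) by (apply Rmult_le_compat_r; lra).
    unfold mu in *. lra. }
  assert (bki : forall x, exists R0, forall n, mdist (ki n x) y0 <= R0).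
  { intros x. exists (4 * (mdist x x0 + r)). intros n.
    rewrite <- (kik n y0). destruct (Lki n x (k n y0)). destruct (Hmu n).
    pose proof (Hb n) as T1. pose proof (mtri x x0 (k n y0)) as T2. rewrite (msym x0) in T2.
    pose proof (mnn x (k n y0)).
    assert (mu n * mdist x (k n y0) <= 4 * mdist x (k n y0)) by (apply Rmult_le_compat_r; lra).
    unfold mu in *. lra. }
  destruct (separable X x0 Hc) as [ee Hee].
  set (dd := fun i => ki 0%nat (ee i)).
  assert (Hdd : dense dd).
  { intros y e He. destruct (Hmu 0%nat) as [M1 M2].
    destruct (Hee (k 0%nat y) (e / mu 0%nat) ltac:(apply Rdiv_lt_0_compat; lra)) as [i Hi].
    exists i. unfold dd. rewrite <- (kik 0%nat y) at 1.
    destruct (Lki 0%nat (k 0%nat y) (ee i)) as [A _]. apply Rle_lt_trans with (1 := A).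
    apply Rmult_lt_compat_l with (r := mu 0%nat) in Hi; auto.
    unfold Rdiv in Hi. rewrite (Rmult_comm e), <- Rmult_assoc, Rinv_r, Rmult_1_l in Hi; [|lra].
    exact Hi. }
  destruct (diag_exists HX HY x0 y0 k ki bk bki dd ee) as [c [b HG]].
  assert (HG' : forall j, IO (Good ki k ee dd b c j)).
  { intros j e He N. destruct (HG j e He N) as [n [Hn Hg]]. exists n. split; auto.
    intros i Hi. destruct (Hg i Hi); split; auto. }
  assert (GE := Gexists HX x0 k ki mu Lk (fun n => proj1 (Hmu n)) Hmu1 kki bk dd ee c b HG).
  assert (HE := Gexists HY y0 ki k mu Lki (fun n => proj1 (Hmu n)) Hmu1 kik bki ee dd b c HG').
  set (G := fun y => epsilon (inhabits x0) (fun a => forall l,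
        mdist a (c l) = mdist y (dd l) /\ mdist a (ee l) = mdist y (b l))).
  set (H := fun x => epsilon (inhabits y0) (fun a => forall l,
        mdist a (b l) = mdist x (ee l) /\ mdist a (dd l) = mdist x (c l))).
  assert (HGs : forall y l, mdist (G y) (c l) = mdist y (dd l) /\ mdist (G y) (ee l) = mdist y (b l)).
  { intros y. unfold G. apply epsilon_spec. apply GE. }
  assert (HHs : forall x l, mdist (H x) (b l) = mdist x (ee l) /\ mdist (H x) (dd l) = mdist x (c l)).
  { intros x. unfold H. apply epsilon_spec. apply HE. }
  exists H. split.
  - exists G. split.
    + intros x. apply pt_eq_of_small. intros e He.
      destruct (Hee x (e/2) ltac:(lra)) as [i Hi].
      destruct (HGs (H x) i) as [_ E1]. destruct (HHs x i) as [E2 _].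
      pose proof (mtri (G (H x)) (ee i) x) as T. rewrite (msym (ee i) x) in T. lra.
    + intros y. apply pt_eq_of_small. intros e He.
      destruct (Hdd y (e/2) ltac:(lra)) as [i Hi].
      destruct (HHs (G y) i) as [_ E1]. destruct (HGs y i) as [E2 _].
      pose proof (mtri (H (G y)) (dd i) y) as T. rewrite (msym (dd i) y) in T. lra.
  - intros x x'. apply eq_of_small. intros e He.
    destruct (Hee x' (e/2) ltac:(lra)) as [i Hi].
    destruct (HHs x' i) as [E1 _]. destruct (HHs x i) as [E2 _].
    pose proof (dist_diff (H x) (H x') (H x) (b i)) as T0.
    pose proof (dist_diff x x' x (ee i)) as T1.
    rewrite dist_self in T0. rewrite dist_self in T1.
    pose proof (Rabs_triang (mdist (H x) (H x') - mdist (H x) (b i)) (mdist x (ee i) - mdist x x')) as T2.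
    pose proof (Rabs_Ropp (mdist x x' - mdist x (ee i))) as T3.
    replace (mdist (H x) (H x') - mdist (H x) (b i) + (mdist x (ee i) - mdist x x'))
      with (mdist (H x) (H x') - mdist x x') in T2 by (rewrite E2; ring).
    replace (- (mdist x x' - mdist x (ee i))) with (mdist x (ee i) - mdist x x') in T3 by ring.
    lra.
Qed.
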